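(* Let $(X,\mu)$ and $(Z,\nu)$ be standard Borel probability spaces, and let $z\mapsto\mu_z$ be a measurable family of uniformly bounded finite Borel measures on $X$ such that $\mu=\int_Z\mu_z\,\nu(dz)$ and $\mu_z\ll_{M,\varepsilon}\mu$ for every $z\in Z$. Suppose that for each $z\in Z$, $Y_z\subseteq X$ is a Borel set with $\mu_z(Y_z)=1$. Then for every $\alpha<1-\varepsilon$ there is a finite set $S\subseteq Z$ with \[|S|\le\frac{M}{1-\alpha-\varepsilon}\quad\text{and}\quad \mu\Big(\bigcup_{z\in S}Y_z\Big)>\alpha.\]
   Context: For finite measures $\mu,\nu$ on a measurable space and $M\in(0,\infty)$, $\varepsilon\in[0,\infty)$, write $\mu\ll_{M,\varepsilon}\nu$ if $\mu(A)\le M\nu(A)+\varepsilon$ for every measurable $A$. The measures $\mu_z$ need not be probability measures. *)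

(* Defs.v *)
From HB Require Import structures.
From mathcomp Require Import all_boot all_order all_algebra.
From mathcomp Require Import all_classical all_reals all_analysis.
Set Implicit Arguments. Unset Strict Implicit. Unset Printing Implicit Defensive.
Import Order.TTheory GRing.Theory Num.Theory.
Local Open Scope classical_set_scope.
Local Open Scope ring_scope.

(* A measurable space is standard Borel iff it is Borel isomorphic to a Borel
   subset of R (Kuratowski): there is a measurable injection into R whose image
   is Borel and which maps measurable sets to measurable sets (so its inverse
   on the image is measurable). *)
Definition standard_borel d (T : measurableType d) (R : realType) : Prop :=
  exists f : T -> R,
    [/\ measurable_fun setT f, injective f, measurable (range f)
      & forall A : set T, measurable A -> measurable (f @` A)].

Definition abs_cont_Meps d (T : measurableType d) (R : realType)
  (M eps : R) (mu nu : set T -> \bar R) : Prop :=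
  forall A : set T, measurable A -> (mu A <= M%:E * nu A + eps%:E)%E.

(* Main.v *)
Require Import Defs.
From HB Require Import structures.
From mathcomp Require Import all_boot all_order all_algebra.
From mathcomp Require Import all_classical all_reals all_analysis.
From mathcomp Require Import measurable_realfun.
From mathcomp Require Import lra.
Import Order.TTheory GRing.Theory Num.Theory.
Local Open Scope classical_set_scope.
Local Open Scope ring_scope.
Local Open Scope ereal_scope.

Lemma exists_le_int (R : realType) dZ (Z : measurableType dZ)
  (nu : {measure set Z -> \bar R}) (g : Z -> \bar R) (c : R) :
  nu [set: Z] = 1 ->
  measurable_fun [set: Z] g -> (forall z, 0 <= g z) ->
  \int[nu]_z g z = c%:E -> exists z, g z <= c%:E.
Proof.
move=> nu1 mg g0 ig; case: (pselect (exists z, g z <= c%:E)) => // H; exfalso.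
have Hlt z : c%:E < g z by rewrite ltNge; apply/negP => hz; apply: H; exists z.
have c0 : (0 <= c)%R by rewrite -lee_fin -ig; apply: integral_ge0 => z _.
have mh : measurable_fun setT (fun z => g z - c%:E).
  by apply: emeasurable_funB => //.
have h0 z : 0 <= g z - c%:E by rewrite sube_ge0 ?fin_numE ?orbT// ltW.
have hint : \int[nu]_z (g z - c%:E) = 0.
  have := @ge0_integralD _ _ R nu setT measurableT (fun z => g z - c%:E) (cst c%:E) (fun z _ => h0 z) mh (fun _ _ => (eqbRL (lee_fin 0 c) c0)) (measurable_cst _).
  rewrite integral_cst // nu1 mule1.
  have E2 : \int[nu]_x (g x - c%:E + cst c%:E x) = \int[nu]_x g x.
 apply: eq_integral => x _. by rewrite /= -addeA -EFinD addNr adde0.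
  rewrite E2.
  rewrite ig; move: (\int[nu]_z (g z - c%:E)) => I.
  case: I => [r| |] //= h.
  move: h; rewrite -EFinD => -[] h.
  congr EFin; apply: (@addIr _ c); by rewrite add0r -h.
have habs : \int[nu]_z `|g z - c%:E| = 0.
  by rewrite -hint; apply: eq_integral => z _; rewrite gee0_abs.
have [N [mN N0 sN]] := (ae_eq_integral_abs nu measurableT mh).1 habs.
have : nu [set: Z] <= nu N.
  apply: le_measure; rewrite ?inE //.
  move=> z _; apply: sN => /= /(_ I) hz.
  by have := Hlt z; rewrite -sube_gt0 hz ltxx.
by rewrite nu1 N0 lee_fin ler10.
Qed.

Local Close Scope ereal_scope.

Theorem mainTheorem9 (R : realType) (dX dZ : measure_display)
  (X : measurableType dX) (Z : measurableType dZ)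
  (mu : probability X R) (nu : probability Z R)
  (k : R.-fker Z ~> X) (M eps : R) (Y : Z -> set X) (alpha : R) :
  standard_borel X R -> standard_borel Z R ->
  0 < M -> 0 <= eps ->
  (forall A : set X, measurable A -> mu A = (\int[nu]_z k z A)%E) ->
  (forall z, abs_cont_Meps M eps (k z) mu) ->
  (forall z, measurable (Y z)) ->
  (forall z, k z (Y z) = 1%E) ->
  alpha < 1 - eps ->
  exists S : seq Z,
    [/\ uniq S,
        (size S)%:R <= M / (1 - alpha - eps)
      & (alpha%:E < mu (\big[setU/set0]_(z <- S) Y z))%E].
Proof.
move=> _ _ M0 eps0 hint hac mY kY1 halpha.
set U := fun S : seq Z => \big[setU/set0]_(z <- S) Y z.
have mU S : measurable (U S).
  by rewrite /U; elim: S => [|a S IH]; rewrite ?big_nil ?big_cons //; apply: measurableU.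
have fmu A : measurable A -> mu A = (fine (mu A))%:E.
  move=> mA; rewrite fineK // ge0_fin_numE ?measure_ge0 //.
  by rewrite (le_lt_trans (probability_le1 mu mA)) ?ltry.
have fmu01 A : measurable A -> (0 <= fine (mu A) <= 1)%R.
  move=> mA; rewrite -!lee_fin -fmu //; rewrite measure_ge0 /=.
  exact: probability_le1.
set c := (1 - alpha - eps) / M.
have c0 : 0 < c by apply: divr_gt0 => //; lra.
have Mc : M * c = 1 - alpha - eps by rewrite /c mulrC -mulrA mulVf ?mulr1 // gt_eqF.
have step S : (mu (U S) <= alpha%:E)%E ->
    exists z, z \notin S /\ (fine (mu (U S)) + c <= fine (mu (Y z `|` U S)))%R.
  move=> hS.
  have [z hz] : exists z, (k z (U S) <= (fine (mu (U S)))%:E)%E.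
    apply: (@exists_le_int R dZ Z nu).
    - exact: probability_setT.
    - exact: measurable_kernel.
    - by move=> z; exact: measure_ge0.
    - by rewrite -hint // -fmu.
  set u := fine (mu (U S)) in hz hS *.
  have mD : measurable (Y z `\` U S) by apply: measurableD.
  set m := fine (mu (Y z `\` U S)).
  have hU : Y z `|` U S = U S `|` (Y z `\` U S).
    by apply/seteqP; split=> x /=; case: (pselect (U S x)); tauto.
  have hmu : mu (Y z `|` U S) = (u + m)%:E.
    rewrite hU measureU //; last by rewrite setDE setICA setICr setI0.
    by rewrite EFinD -!fmu.
  have h1 : (1 <= M * m + eps + u)%R.
    rewrite -lee_fin -(kY1 z) (measureDI (k z) (mY z) (mU S)) !EFinD.
    apply: leeD; last first.
      apply: le_trans hz; apply: le_measure; rewrite ?inE //; try exact: measurableI; exact: subIsetr.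
    by rewrite EFinM /m -fmu //; apply: hac.
  have hu : (u <= alpha)%R by rewrite -lee_fin -fmu.
  have hm : (c <= m)%R.
    by rewrite -(ler_pM2l M0) Mc; lra.
  exists z; split; last by rewrite hmu /=; lra.
  apply/negP => zS.
  have : Y z `\` U S = set0.
    apply/seteqP; split => x //= [yx]; apply.
    by rewrite /U (big_rem z zS) /=; left.
  move=> e; move: hm; rewrite /m e measure0 /=; lra.
have size_ok S : (mu (U S) <= 1)%E -> (((size S)%:R * c)%:E <= mu (U S))%E -> ((size S)%:R <= M / (1 - alpha - eps))%R.
  move=> h1 hn.
  have hc : (M / (1 - alpha - eps) = 1 / c)%R by rewrite /c div1r invf_div.
  rewrite hc ler_pdivlMr // -lee_fin; exact: le_trans hn h1.
have key n : (exists S : seq Z, [/\ uniq S, (size S)%:R <= M / (1 - alpha - eps)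
      & (alpha%:E < mu (U S))%E]) \/
    exists S, [/\ uniq S, size S = n & ((n%:R * c)%:E <= mu (U S))%E].
  elim: n => [|n [IH|[S [uS sS hS]]]].
  - by right; exists [::]; split => //; rewrite mul0r measure_ge0.
  - by left.
  case: (leP (mu (U S)) alpha%:E) => hSa; last first.
    left; exists S; split => //; apply: size_ok; rewrite ?sS //.
    exact: probability_le1.
  have [z [zS hz]] := step S hSa.
  right; exists (z :: S); split => //=; first by rewrite zS.
  - by rewrite sS.
  rewrite /U big_cons -/(U S) fmu; last by apply: measurableU.
  rewrite lee_fin; apply: le_trans hz.
  rewrite -nat1r mulrDl mul1r addrC lerD2r -lee_fin -fmu //.
have [n hn] : exists n : nat, 1 < n%:R * c.
  exists (Num.bound (1 / c)).
  rewrite -ltr_pdivrMr //; apply: archi_boundP.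
  by rewrite div1r invr_ge0 ltW.
case: (key n) => [//|[S [_ sS hS]]].
have := le_trans hS (probability_le1 mu (mU S)).
by rewrite lee_fin leNgt hn.
Qed.
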